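(* Let $A\bowtie^{\theta} I$ be an amalgamated Banach algebra as in the context, and assume that $A\bowtie^\theta I$ is commutative, $\sigma(A)\neq\emptyset$, and $\theta(A)I=\{\theta(a)i: a\in A, i\in I\}$ has dense linear span in $I$. Then $A\bowtie^{\theta} I$ is semisimple if and only if both $A$ and $I$ are semisimple.
   Context: Let $A$ and $B$ be Banach algebras, $\theta:A\to B$ a continuous algebra homomorphism with $\|\theta\|\le 1$, and $I$ a closed two-sided ideal of $B$. The amalgamated Banach algebra $A\bowtie^{\theta} I$ is the Banach space $\{(a,i): a\in A,\ i\in I\}$ with norm $\|(a,i)\|=\|a\|+\|i\|$ and product $(a,i)\cdot(a',i')=(aa',\ \theta(a)i'+i\theta(a')+ii')$. For a commutative Banach algebra $C$, $\sigma(C)$ is the set of nonzero multiplicative linear functionals on $C$, $\mathrm{rad}\,C=\bigcap_{\chi\in\sigma(C)}\ker\chi$ (equal to $C$ if $\sigma(C)=\emptyset$), and $C$ is semisimple if $\mathrm{rad}\,C=\{0\}$. *)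

(* Defs.v *)
From Stdlib Require Import Reals List.
Open Scope R_scope.
Set Implicit Arguments.

Record C := mkC { Re : R; Im : R }.
Definition C0 : C := mkC 0 0.
Definition C1 : C := mkC 1 0.
Definition Cadd (z w : C) : C := mkC (Re z + Re w) (Im z + Im w).
Definition Cmul (z w : C) : C :=
  mkC (Re z * Re w - Im z * Im w) (Re z * Im w + Im z * Re w).
Definition Cnorm (z : C) : R := sqrt (Re z * Re z + Im z * Im z).

Record BanachAlgebra := {
  ba_car :> Type;
  ba_zero : ba_car;
  ba_add : ba_car -> ba_car -> ba_car;
  ba_opp : ba_car -> ba_car;
  ba_scal : C -> ba_car -> ba_car;
  ba_mul : ba_car -> ba_car -> ba_car;
  ba_norm : ba_car -> R;
  ba_addA : forall x y z, ba_add x (ba_add y z) = ba_add (ba_add x y) z;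
  ba_addC : forall x y, ba_add x y = ba_add y x;
  ba_add0 : forall x, ba_add ba_zero x = x;
  ba_addN : forall x, ba_add x (ba_opp x) = ba_zero;
  ba_scalA : forall a b x, ba_scal a (ba_scal b x) = ba_scal (Cmul a b) x;
  ba_scal1 : forall x, ba_scal C1 x = x;
  ba_scalDr : forall a x y, ba_scal a (ba_add x y) = ba_add (ba_scal a x) (ba_scal a y);
  ba_scalDl : forall a b x, ba_scal (Cadd a b) x = ba_add (ba_scal a x) (ba_scal b x);
  ba_mulA : forall x y z, ba_mul x (ba_mul y z) = ba_mul (ba_mul x y) z;
  ba_mulDr : forall x y z, ba_mul x (ba_add y z) = ba_add (ba_mul x y) (ba_mul x z);
  ba_mulDl : forall x y z, ba_mul (ba_add x y) z = ba_add (ba_mul x z) (ba_mul y z);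
  ba_mulZl : forall a x y, ba_mul (ba_scal a x) y = ba_scal a (ba_mul x y);
  ba_mulZr : forall a x y, ba_mul x (ba_scal a y) = ba_scal a (ba_mul x y);
  ba_norm_eq0 : forall x, ba_norm x = 0 <-> x = ba_zero;
  ba_normD : forall x y, ba_norm (ba_add x y) <= ba_norm x + ba_norm y;
  ba_normZ : forall a x, ba_norm (ba_scal a x) = Cnorm a * ba_norm x;
  ba_normM : forall x y, ba_norm (ba_mul x y) <= ba_norm x * ba_norm y;
  ba_complete : forall u : nat -> ba_car,
    (forall eps, eps > 0 -> exists N, forall m n, (N <= m)%nat -> (N <= n)%nat ->
        ba_norm (ba_add (u m) (ba_opp (u n))) < eps) ->
    exists l, forall eps, eps > 0 -> exists N, forall n, (N <= n)%nat ->
        ba_norm (ba_add (u n) (ba_opp l)) < eps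
}.

Definition ba_sub (B : BanachAlgebra) (x y : B) : B := ba_add B x (ba_opp B y).

Record closed_ideal (B : BanachAlgebra) := {
  ci_mem : B -> Prop;
  ci_zero : ci_mem (ba_zero B);
  ci_add : forall x y, ci_mem x -> ci_mem y -> ci_mem (ba_add B x y);
  ci_scal : forall a x, ci_mem x -> ci_mem (ba_scal B a x);
  ci_mull : forall b x, ci_mem x -> ci_mem (ba_mul B b x);
  ci_mulr : forall b x, ci_mem x -> ci_mem (ba_mul B x b);
  ci_closed : forall (u : nat -> B) (l : B), (forall n, ci_mem (u n)) ->
    (forall eps, eps > 0 -> exists N, forall n, (N <= n)%nat ->
        ba_norm B (ba_sub B (u n) l) < eps) -> ci_mem l
}.

Definition isub (B : BanachAlgebra) (I : closed_ideal B) : Type := { x : B | ci_mem I x }.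

Section Ideal.
Variables (B : BanachAlgebra) (I : closed_ideal B).
Definition isub_zero : isub I := exist _ (ba_zero B) (ci_zero I).
Definition isub_add (x y : isub I) : isub I :=
  exist _ (ba_add B (proj1_sig x) (proj1_sig y)) (ci_add I _ _ (proj2_sig x) (proj2_sig y)).
Definition isub_scal (a : C) (x : isub I) : isub I :=
  exist _ (ba_scal B a (proj1_sig x)) (ci_scal I a _ (proj2_sig x)).
Definition isub_mul (x y : isub I) : isub I :=
  exist _ (ba_mul B (proj1_sig x) (proj1_sig y)) (ci_mulr I (proj1_sig y) _ (proj2_sig x)).
Definition isub_lmul (b : B) (x : isub I) : isub I :=
  exist _ (ba_mul B b (proj1_sig x)) (ci_mull I b _ (proj2_sig x)).
Definition isub_rmul (x : isub I) (b : B) : isub I :=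
  exist _ (ba_mul B (proj1_sig x) b) (ci_mulr I b _ (proj2_sig x)).
End Ideal.

Section Amalgamation.
Variables (A B : BanachAlgebra) (theta : A -> B) (I : closed_ideal B).
Definition amal : Type := (ba_car A * isub I)%type.
Definition amal_zero : amal := (ba_zero A, isub_zero I).
Definition amal_add (x y : amal) : amal :=
  (ba_add A (fst x) (fst y), isub_add (snd x) (snd y)).
Definition amal_scal (c : C) (x : amal) : amal :=
  (ba_scal A c (fst x), isub_scal c (snd x)).
Definition amal_mul (x y : amal) : amal :=
  (ba_mul A (fst x) (fst y),
   isub_add (isub_add (isub_lmul (theta (fst x)) (snd y)) (isub_rmul (snd x) (theta (fst y))))
            (isub_mul (snd x) (snd y))).
Definition amal_norm (x : amal) : R := ba_norm A (fst x) + ba_norm B (proj1_sig (snd x)).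
End Amalgamation.

Definition is_character {T : Type} (add : T -> T -> T) (scal : C -> T -> T)
    (mul : T -> T -> T) (chi : T -> C) : Prop :=
  (forall x y, chi (add x y) = Cadd (chi x) (chi y)) /\
  (forall c x, chi (scal c x) = Cmul c (chi x)) /\
  (forall x y, chi (mul x y) = Cmul (chi x) (chi y)) /\
  (exists x, chi x <> C0).

(* x ∈ rad T  iff  chi x = 0 for every chi ∈ σ(T) (so rad T = T if σ(T) = ∅) *)
Definition in_rad {T : Type} (add : T -> T -> T) (scal : C -> T -> T)
    (mul : T -> T -> T) (x : T) : Prop :=
  forall chi, is_character add scal mul chi -> chi x = C0.

Definition semisimple {T : Type} (zero : T) (add : T -> T -> T) (scal : C -> T -> T)
    (mul : T -> T -> T) : Prop :=
  forall x, in_rad add scal mul x -> x = zero.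

Definition span_sum (A B : BanachAlgebra) (theta : A -> B) (I : closed_ideal B)
    (l : list (C * ba_car A * isub I)) : B :=
  fold_right (fun t acc =>
     ba_add B (ba_scal B (fst (fst t)) (ba_mul B (theta (snd (fst t))) (proj1_sig (snd t)))) acc)
   (ba_zero B) l.

Definition dense_span (A B : BanachAlgebra) (theta : A -> B) (I : closed_ideal B) : Prop :=
  forall x : B, ci_mem I x -> forall eps, eps > 0 ->
    exists l : list (C * ba_car A * isub I),
      ba_norm B (ba_sub B x (@span_sum A B theta I l)) < eps.

(* Main.v *)
Require Import Defs.
From Stdlib Require Import Reals List Lra ProofIrrelevance Classical.
Open Scope R_scope.

Ltac cdes := repeat match goal with z : Defs.C |- _ => destruct z end;
  unfold Cadd, Cmul, C0, Defs.C1 in *; simpl in *.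

Lemma Cadd_self z : Cadd z z = z -> z = C0.
Proof. destruct z as [a b]; unfold Cadd, C0; simpl; intro H; injection H; intros; f_equal; lra. Qed.
Lemma Cadd_0l z : Cadd C0 z = z.
Proof. cdes; f_equal; ring. Qed.
Lemma Cadd_0r z : Cadd z C0 = z.
Proof. cdes; f_equal; ring. Qed.
Lemma Cmul_0l z : Cmul C0 z = C0.
Proof. cdes; f_equal; ring. Qed.
Lemma Cmul_1r z : Cmul z Defs.C1 = z.
Proof. cdes; f_equal; ring. Qed.
Lemma Cmul_assoc a b c : Cmul (Cmul a b) c = Cmul a (Cmul b c).
Proof. cdes; f_equal; ring. Qed.
Lemma Cmul_comm a b : Cmul a b = Cmul b a.
Proof. cdes; f_equal; ring. Qed.

Definition Cinv (z : Defs.C) : Defs.C :=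
  mkC (Re z / (Re z * Re z + Im z * Im z)) (- Im z / (Re z * Re z + Im z * Im z)).

Lemma Cmul_inv p : p <> C0 -> Cmul p (Cinv p) = Defs.C1.
Proof.
  destruct p as [a b]; unfold Cinv, Cmul, C0, Defs.C1; simpl; intro H.
  assert (Hn : a * a + b * b <> 0).
  { intro E. apply H. assert (a = 0) by nra. assert (b = 0) by nra. subst; reflexivity. }
  f_equal; field; auto.
Qed.

Lemma Cdiv_lemma u v q p : p <> C0 -> Cmul u p = Cmul v q ->
  u = Cmul (Cmul v (Cinv p)) q.
Proof.
  intros Hp E.
  rewrite <- (Cmul_1r u), <- (Cmul_inv _ Hp), <- Cmul_assoc, E.
  rewrite !Cmul_assoc, (Cmul_comm q). reflexivity.
Qed.

Section Alg.
Variable X : BanachAlgebra.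
Lemma add_self (x : X) : ba_add X x x = x -> x = ba_zero X.
Proof.
  intro H. rewrite <- (ba_addN X x). rewrite <- H at 2.
  rewrite <- ba_addA, ba_addN, ba_addC, ba_add0. reflexivity.
Qed.
Lemma mul0l (y : X) : ba_mul X (ba_zero X) y = ba_zero X.
Proof. apply add_self. rewrite <- ba_mulDl, ba_add0. reflexivity. Qed.
Lemma mul0r (y : X) : ba_mul X y (ba_zero X) = ba_zero X.
Proof. apply add_self. rewrite <- ba_mulDr, ba_add0. reflexivity. Qed.
Lemma scal0 c : ba_scal X c (ba_zero X) = ba_zero X.
Proof. apply add_self. rewrite <- ba_scalDr, ba_add0. reflexivity. Qed.
Lemma add0r (x : X) : ba_add X x (ba_zero X) = x.
Proof. rewrite ba_addC; apply ba_add0. Qed.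
End Alg.

Lemma isub_eq (B : BanachAlgebra) (I : closed_ideal B) (x y : isub I) :
  proj1_sig x = proj1_sig y -> x = y.
Proof. destruct x, y; simpl; intros ->; f_equal; apply proof_irrelevance. Qed.

Lemma char0 {T : Type} (add : T -> T -> T) (chi : T -> Defs.C) z :
  (forall x y, chi (add x y) = Cadd (chi x) (chi y)) -> add z z = z -> chi z = C0.
Proof. intros H E. apply Cadd_self. rewrite <- H, E. reflexivity. Qed.


Theorem corollary5p4 (A B : BanachAlgebra) (theta : ba_car A -> ba_car B)
  (theta_add : forall x y, theta (ba_add A x y) = ba_add B (theta x) (theta y))
  (theta_scal : forall c x, theta (ba_scal A c x) = ba_scal B c (theta x))
  (theta_mul : forall x y, theta (ba_mul A x y) = ba_mul B (theta x) (theta y))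
  (theta_norm : forall x, ba_norm B (theta x) <= ba_norm A x)
  (I : closed_ideal B)
  (Hcomm : forall x y : amal A I, @amal_mul A B theta I x y = @amal_mul A B theta I y x)
  (HsigmaA : exists chi, is_character (ba_add A) (ba_scal A) (ba_mul A) chi)
  (Hdense : @dense_span A B theta I) :
  semisimple (amal_zero A I) (@amal_add A B I) (@amal_scal A B I) (@amal_mul A B theta I)
  <->
  (semisimple (ba_zero A) (ba_add A) (ba_scal A) (ba_mul A) /\
   semisimple (@isub_zero B I) (@isub_add B I) (@isub_scal B I) (@isub_mul B I)).
Proof.
  assert (th0 : theta (ba_zero A) = ba_zero B).
  { apply add_self. rewrite <- theta_add, ba_add0. reflexivity. }
  assert (comm1 : forall a (j : isub I),
    ba_mul B (theta a) (proj1_sig j) = ba_mul B (proj1_sig j) (theta a)).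
  { intros a j. pose proof (Hcomm (a, isub_zero I) (ba_zero A, j)) as H.
    apply (f_equal (fun p => proj1_sig (snd p))) in H. simpl in H.
    rewrite th0, !mul0l, !mul0r, !add0r, ba_add0 in H. exact H. }
  assert (comm2 : forall (j k : isub I),
    ba_mul B (proj1_sig j) (proj1_sig k) = ba_mul B (proj1_sig k) (proj1_sig j)).
  { intros j k. pose proof (Hcomm (ba_zero A, j) (ba_zero A, k)) as H.
    apply (f_equal (fun p => proj1_sig (snd p))) in H. simpl in H.
    rewrite th0, !mul0l, !mul0r, !ba_add0 in H. exact H. }
  split.
  - intro Hs. split.
    + intros x Hx.
      assert (E : (x, isub_zero I) = amal_zero A I).
      { apply Hs. intros chi [Hadd [Hscal [Hmul Hnz]]].
        set (phi := fun a => chi (a, isub_zero I)).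
        assert (Padd : forall a b, phi (ba_add A a b) = Cadd (phi a) (phi b)).
        { intros a b. unfold phi. rewrite <- Hadd. f_equal. unfold amal_add; simpl.
          f_equal. apply isub_eq; simpl. symmetry; apply ba_add0. }
        assert (Pscal : forall c a, phi (ba_scal A c a) = Cmul c (phi a)).
        { intros c a. unfold phi. rewrite <- Hscal. f_equal. unfold amal_scal; simpl.
          f_equal. apply isub_eq; simpl. symmetry; apply scal0. }
        assert (Pmul : forall a b, phi (ba_mul A a b) = Cmul (phi a) (phi b)).
        { intros a b. unfold phi. rewrite <- Hmul. f_equal. unfold amal_mul; simpl.
          f_equal. apply isub_eq; simpl. rewrite !mul0l, !mul0r, !ba_add0. reflexivity. }
        destruct (classic (exists a, phi a <> C0)) as [Hex | Hno].
        - apply (Hx phi). repeat split; auto.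
        - destruct (classic (phi x = C0)) as [h|h]; auto. exfalso; apply Hno; eauto. }
      apply (f_equal fst) in E. exact E.
    + intros i Hi.
      assert (E : (ba_zero A, i) = amal_zero A I).
      { apply Hs. intros chi [Hadd [Hscal [Hmul Hnz]]].
        set (psi := fun j => chi (ba_zero A, j)).
        assert (Padd : forall a b, psi (isub_add a b) = Cadd (psi a) (psi b)).
        { intros a b. unfold psi. rewrite <- Hadd. f_equal. unfold amal_add; simpl.
          f_equal. symmetry; apply ba_add0. }
        assert (Pscal : forall c a, psi (isub_scal c a) = Cmul c (psi a)).
        { intros c a. unfold psi. rewrite <- Hscal. f_equal. unfold amal_scal; simpl.
          f_equal. symmetry; apply scal0. }
        assert (Pmul : forall a b, psi (isub_mul a b) = Cmul (psi a) (psi b)).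
        { intros a b. unfold psi. rewrite <- Hmul. f_equal. unfold amal_mul; simpl.
          f_equal. { symmetry; apply mul0l. } apply isub_eq; simpl.
          rewrite th0, !mul0l, !mul0r, !ba_add0. reflexivity. }
        destruct (classic (exists a, psi a <> C0)) as [Hex | Hno].
        - apply (Hi psi). repeat split; auto.
        - destruct (classic (psi i = C0)) as [h|h]; auto. exfalso; apply Hno; eauto. }
      apply (f_equal snd) in E. exact E.
  - intros [HA HI] [a i] Hr.
    assert (Ha : a = ba_zero A).
    { apply HA. intros phi [Hadd [Hscal [Hmul [a0 Hnz]]]].
      apply (Hr (fun p => phi (fst p))). repeat split.
      + intros; apply Hadd.
      + intros; apply Hscal.
      + intros; apply Hmul.
      + exists (a0, isub_zero I); exact Hnz. }
    subst a.
    assert (Hi : i = isub_zero I).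
    { apply HI. intros psi [Hadd [Hscal [Hmul [i0 Hnz]]]].
      set (k := Cinv (psi i0)).
      set (f := fun a => Cmul (psi (isub_lmul (theta a) i0)) k).
      assert (psi0 : psi (isub_zero I) = C0).
      { apply (char0 (@isub_add B I)); auto. apply isub_eq; simpl; apply ba_add0. }
      assert (f0 : f (ba_zero A) = C0).
      { unfold f. replace (isub_lmul (theta (ba_zero A)) i0) with (isub_zero I).
        - rewrite psi0; apply Cmul_0l.
        - apply isub_eq; simpl. rewrite th0, mul0l; reflexivity. }
      assert (L : forall a j, psi (isub_lmul (theta a) j) = Cmul (f a) (psi j)).
      { intros a j. unfold f, k. apply Cdiv_lemma; auto. rewrite <- !Hmul.
        f_equal. apply isub_eq; simpl. rewrite <- !ba_mulA, (comm2 j i0). reflexivity. }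
      assert (chi_char : is_character (@amal_add A B I) (@amal_scal A B I)
                (@amal_mul A B theta I) (fun p => Cadd (f (fst p)) (psi (snd p)))).
      { repeat split.
        - intros [x j] [y l]; simpl. rewrite Hadd.
          unfold f. replace (isub_lmul (theta (ba_add A x y)) i0) with
            (isub_add (isub_lmul (theta x) i0) (isub_lmul (theta y) i0)).
          + rewrite Hadd. generalize (psi (isub_lmul (theta x) i0)),
              (psi (isub_lmul (theta y) i0)), (psi j), (psi l), k. intros.
            cdes. f_equal; ring.
          + apply isub_eq; simpl. rewrite theta_add, ba_mulDl. reflexivity.
        - intros c [x j]; simpl. rewrite Hscal.
          unfold f. replace (isub_lmul (theta (ba_scal A c x)) i0) with
            (isub_scal c (isub_lmul (theta x) i0)).
          + rewrite Hscal. generalize (psi (isub_lmul (theta x) i0)), (psi j), k. intros.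
            cdes. f_equal; ring.
          + apply isub_eq; simpl. rewrite theta_scal, ba_mulZl. reflexivity.
        - intros [x j] [y l]; simpl. rewrite !Hadd, Hmul.
          replace (isub_rmul j (theta y)) with (isub_lmul (theta y) j)
            by (apply isub_eq; simpl; apply comm1).
          rewrite !L.
          assert (fm : f (ba_mul A x y) = Cmul (f x) (f y)).
          { unfold f at 1. replace (isub_lmul (theta (ba_mul A x y)) i0) with
              (isub_lmul (theta x) (isub_lmul (theta y) i0)).
            - rewrite L. unfold f. rewrite Cmul_assoc. reflexivity.
            - apply isub_eq; simpl. rewrite theta_mul, ba_mulA. reflexivity. }
          rewrite fm. generalize (f x), (f y), (psi j), (psi l). intros.
          cdes. f_equal; ring.
        - exists (ba_zero A, i0); simpl. rewrite f0, Cadd_0l. exact Hnz. }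
      pose proof (Hr _ chi_char) as H. simpl in H. rewrite f0, Cadd_0l in H. exact H. }
    subst i. reflexivity.
Qed.
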